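(* Let $H$ be an abelian group with an alternating $\mathbb{Z}$-bilinear form $\langle-,-\rangle$, and let $f:H^{(1)}\to\mathbb{Z}$ be a function such that $f(u+v)=f(u)+f(v)$ for all $u,v\in H^{(1)}$ with $\langle u,v\rangle\neq0$. Then $f(u+v)=f(u)+f(v)$ for all $u,v\in H^{(1)}$ with $u+v\in H^{(1)}$, and $f(nu)=nf(u)$ for all $u\in H^{(1)}$ and $n\in\mathbb{Z}\setminus\{0\}$.
   Context: $\mu:H\to\mathrm{Hom}_{\mathbb{Z}}(H,\mathbb{Z})$, $\mu(x)(y)=\langle x,y\rangle$; $H^{(1)}:=H\setminus\ker\mu$. *)

(* Defs.v *)
From mathcomp Require Import all_boot all_order all_algebra.
Set Implicit Arguments. Unset Strict Implicit. Unset Printing Implicit Defensive.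
Import Order.TTheory GRing.Theory Num.Theory.
Local Open Scope ring_scope.

Definition bilinear_form (H : zmodType) (b : H -> H -> int) : Prop :=
  (forall x y z, b (x + y) z = b x z + b y z) /\
  (forall x y z, b x (y + z) = b x y + b x z).

Definition alternating (H : zmodType) (b : H -> H -> int) : Prop :=
  forall x, b x x = 0.

Definition mu (H : zmodType) (b : H -> H -> int) (x : H) : H -> int :=
  fun y => b x y.

Definition H1 (H : zmodType) (b : H -> H -> int) (x : H) : Prop :=
  mu b x <> (fun _ => 0).

(* Main.v *)
Require Import Defs.
From mathcomp Require Import all_boot all_order all_algebra.
From mathcomp Require Import zify.
From Stdlib Require Import Classical FunctionalExtensionality.
Import Order.TTheory GRing.Theory Num.Theory.
Local Open Scope ring_scope.

Set Implicit Arguments. Unset Strict Implicit.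
Section S.
Variables (H : zmodType) (b : H -> H -> int).
Hypothesis hbil : bilinear_form b.
Hypothesis halt : alternating b.

Lemma bD1 x y z : b (x + y) z = b x z + b y z. Proof. exact: hbil.1. Qed.
Lemma bD2 x y z : b x (y + z) = b x y + b x z. Proof. exact: hbil.2. Qed.
Lemma b01 y : b 0 y = 0.
Proof. have := bD1 0 0 y; rewrite addr0 => E. lia. Qed.
Lemma bN1 x y : b (- x) y = - b x y.
Proof. have := bD1 x (- x) y; rewrite subrr b01 => E. lia. Qed.
Lemma bC x y : b y x = - b x y.
Proof.
have := halt (x + y); rewrite bD1 !bD2 (halt x) (halt y) => E. lia.
Qed.
Lemma bMn x y k : b (x *+ k) y = b x y *+ k.
Proof.
elim: k => [|k IH]; first by rewrite !mulr0n b01.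
by rewrite !mulrS bD1 IH.
Qed.

Lemma H1_of x y : b x y <> 0 -> H1 b x.
Proof. move=> nz E; apply: nz; exact: (congr1 (fun g => g y) E). Qed.

Lemma H1_ex x : H1 b x -> exists y, b x y <> 0.
Proof.
move=> h; apply: NNPP => N; apply: h; apply: functional_extensionality => y.
rewrite /mu; apply: NNPP => nz; apply: N; by exists y.
Qed.

Lemma find_w u v : H1 b u -> H1 b v -> H1 b (u + v) ->
  exists w, b u w <> 0 /\ b v w <> 0 /\ b (u + v) w <> 0.
Proof.
move=> /H1_ex [a ha] /H1_ex [c hc] /H1_ex [d hd].
move: hd; rewrite bD1 => hd.
have [e1|n1] := eqVneq (b u d) 0.
-
  have : (b v a <> 0 /\ b u a + b v a <> 0) \/
    (b v a + b v d <> 0 /\ b u a + b v a + b v d <> 0) \/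
    (b v a + b v d + b v d <> 0 /\ b u a + b v a + b v d + b v d <> 0) by lia.
  case=> [|[|]] [h1 h2].
  + by exists a; rewrite bD1; split.
  + exists (a + d); rewrite !bD1 !bD2; split; [lia|split; lia].
  + exists (a + d + d); rewrite !bD1 !bD2; split; [lia|split; lia].
have [e2|n2] := eqVneq (b v d) 0.
- have : (b u c <> 0 /\ b u c + b v c <> 0) \/
    (b u c + b u d <> 0 /\ b u c + b v c + b u d <> 0) \/
    (b u c + b u d + b u d <> 0 /\ b u c + b v c + b u d + b u d <> 0) by lia.
  case=> [|[|]] [h1 h2].
  + by exists c; rewrite bD1; split.
  + exists (c + d); rewrite !bD1 !bD2; split; [lia|split; lia].
  + exists (c + d + d); rewrite !bD1 !bD2; split; [lia|split; lia].
exists d; rewrite bD1; split; [exact/eqP|split; [exact/eqP|lia]].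
Qed.

End S.

Theorem lemma5p3 (H : zmodType) (b : H -> H -> int)
  (hbil : bilinear_form b) (halt : alternating b)
  (f : H -> int)
  (hf : forall u v, H1 b u -> H1 b v -> b u v <> 0 -> f (u + v) = f u + f v) :
  (forall u v, H1 b u -> H1 b v -> H1 b (u + v) -> f (u + v) = f u + f v) /\
  (forall (u : H) (n : int), H1 b u -> n <> 0 -> f (u *~ n) = f u *~ n).
Proof.
have P1 : forall u v, H1 b u -> H1 b v -> H1 b (u + v) -> f (u + v) = f u + f v.
  move=> u v hu hv huv.
  have [e|ne] := eqVneq (b u v) 0; last by apply: hf => //; exact/eqP.
  have [w [h1 [h2 h3]]] := find_w hbil hu hv huv.
  have hwu : b w u <> 0 by rewrite (bC hbil halt); lia.
  have E1 := hf _ _ (H1_of h3) (H1_of hwu) h3.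
  have hvw : b (v + w) u <> 0.
    rewrite (bD1 hbil) (bC hbil halt u v) (bC hbil halt u w) e; lia.
  have huvw : b u (v + w) <> 0 by rewrite (bD2 hbil) e; lia.
  have E2 := hf _ _ (H1_of h1) (H1_of hvw) huvw.
  have E3 := hf _ _ (H1_of h2) (H1_of hwu) h2.
  rewrite addrA E3 E1 in E2; lia.
split => //.
have Nf : forall u, H1 b u -> f (- u) = - f u.
  move=> u hu; have [w hw] := H1_ex hu.
  have hwu : b w u <> 0 by rewrite (bC hbil halt); lia.
  have huw : b (u + w) u <> 0 by rewrite (bD1 hbil) halt; lia.
  have hnu : b (- u) w <> 0 by rewrite (bN1 hbil); lia.
  have E := P1 _ _ (H1_of hnu) (H1_of huw) (_ : H1 b (- u + (u + w))).
  rewrite addrA addNr add0r in E.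
  have E' := hf _ _ (H1_of hw) (H1_of hwu) hw.
  have := E (H1_of hwu); rewrite E'; lia.
have Mn : forall u k, H1 b u -> H1 b (u *+ k.+1) /\ f (u *+ k.+1) = f u *+ k.+1.
  move=> u k hu; have [w hw] := H1_ex hu.
  elim: k => [|k [IH1 IH2]]; first by rewrite !mulr1n.
  have hk : b (u *+ k.+2) w <> 0.
    rewrite (bMn hbil) => /eqP; rewrite mulrn_eq0 /=; exact/negP/eqP.
  split; first exact: H1_of hk.
  have hs : H1 b (u *+ k.+1 + u) by rewrite addrC -mulrS; exact: H1_of hk.
  rewrite (mulrS u) addrC (P1 _ _ IH1 (H1_of hw) hs) IH2.
  by rewrite [RHS]mulrSr.
move=> u [[|k]|k] hu hn //.
- by have [_ ->] := Mn u k hu.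
- rewrite !NegzE !mulrNz Nf; first by have [_ ->] := Mn u k hu.
  by have [h _] := Mn u k hu.
Qed.
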